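(* Let $T\in\mathbb{R}$, let $v\ge2$ be an integer or $v=\infty$, and for each integer $2\le j<v+1$ let $S_j:\Delta_j\to\mathbb{R}$ be a continuous function, such that the family satisfies the coherence axiom: whenever $2\le m<n<v+1$, $1\le i_1<\cdots<i_m\le n$ and $p\in\Delta_n$ has $p_j=0$ for all $j\notin\{i_1,\ldots,i_m\}$, then $S_n(p_1,\ldots,p_n)=S_m(p_{i_1},\ldots,p_{i_m})$. Let $\mathbf{T}$ be an $(n,v)$-tree with $n\ge 2$. Then for all $x_1,\ldots,x_n\in\mathbb{R}$, $$(x_1\oplus_S\cdots\oplus_S x_n)_{\mathbf{T}}=\min_{p\in\Delta_n}\Big(\sum_{i=1}^np_ix_i-T\,S_{\mathbf{T}}(p_1,\ldots,p_n)\Big).$$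
   Context: $\Delta_k=\{p\in[0,\infty)^k:\sum_ip_i=1\}$. An $(n,v)$-tree is a finite rooted tree in which every vertex is either a leaf or has between $2$ and $v$ children, ordered from left to right, and whose $n$ leaves are labelled bijectively by $\{1,\ldots,n\}$. For $2\le m<v+1$ and $y_1,\ldots,y_m\in\mathbb{R}$ define the $m$-ary operation $\bigoplus_m(y_1,\ldots,y_m)=\min_{q\in\Delta_m}\big(\sum_jq_jy_j-T\,S_m(q)\big)$. For a tree (or subtree, whose leaves carry a label set) define recursively: a single leaf labelled $i$ has value $x_i$ and entropy $0$; if the root has subtrees $\mathbf{A}_1,\ldots,\mathbf{A}_m$ (left to right) with label sets $L_1,\ldots,L_m$, the value is $(x_1\oplus_S\cdots\oplus_Sx_n)_{\mathbf{T}}=\bigoplus_m(\text{value of }\mathbf{A}_1,\ldots,\text{value of }\mathbf{A}_m)$ and, for a probability vector $p$ indexed by the labels, with $P_j=\sum_{i\in L_j}p_i$, $$S_{\mathbf{T}}(p)=S_m(P_1,\ldots,P_m)+\sum_{j=1}^mP_j\,S_{\mathbf{A}_j}\big((p_i/P_j)_{i\in L_j}\big),$$ where a term with $P_j=0$ is taken to be $0$. *)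

(* Defs.v *)
From HB Require Import structures.
From mathcomp Require Import all_boot all_order all_algebra.
From mathcomp Require Import all_classical all_reals all_analysis.
Set Implicit Arguments. Unset Strict Implicit. Unset Printing Implicit Defensive.
Import Order.TTheory GRing.Theory Num.Theory.
Import numFieldNormedType.Exports.
Local Open Scope classical_set_scope.
Local Open Scope ring_scope.

Definition simplex (R : realType) (k : nat) : set 'rV[R]_k :=
  [set p | (forall i, 0 <= p ord0 i) /\ \sum_(i < k) p ord0 i = 1].

(* v : option nat, None standing for v = infinity. [below v j] means j < v + 1. *)
Definition below (v : option nat) (j : nat) : bool :=
  if v is Some v' then (j <= v')%N else true.

(* The m-ary operation (+)_m : min over q in Delta_m (written as inf; the
   minimum is attained when S m is continuous on the compact simplex). *)
Definition bigoplus (R : realType) (T : R) (S : forall j, 'rV[R]_j -> R)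
  (m : nat) (y : 'rV[R]_m) : R :=
  inf [set \sum_(j < m) q ord0 j * y ord0 j - T * S m q | q in @simplex R m].

Inductive tree (n : nat) : Type :=
| Leaf of 'I_n
| Node of seq (tree n).
Arguments Leaf {n}.
Arguments Node {n}.

Fixpoint leaves n (t : tree n) : seq 'I_n :=
  match t with
  | Leaf i => [:: i]
  | Node ts => flatten (map (@leaves n) ts)
  end.

Fixpoint arity_ok (v : option nat) n (t : tree n) : bool :=
  match t with
  | Leaf _ => true
  | Node ts => [&& (2 <= size ts)%N, below v (size ts) & all (@arity_ok v n) ts]
  end.

Definition is_nv_tree (v : option nat) n (t : tree n) : bool :=
  arity_ok v t && perm_eq (leaves t) (enum 'I_n).

Fixpoint tree_val (R : realType) (T : R) (S : forall j, 'rV[R]_j -> R) n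
  (x : 'I_n -> R) (t : tree n) : R :=
  match t with
  | Leaf i => x i
  | Node ts =>
      let ys := map (@tree_val R T S n x) ts in
      bigoplus T S (\row_(j < size ys) nth 0 ys j)
  end.

Definition mass (R : realType) n (t : tree n) (p : 'I_n -> R) : R :=
  \sum_(i <- leaves t) p i.

Fixpoint tent (R : realType) (S : forall j, 'rV[R]_j -> R) n
  (t : tree n) (p : 'I_n -> R) : R :=
  match t with
  | Leaf _ => 0
  | Node ts =>
      S (size ts) (\row_(j < size ts) mass (nth t ts j) p)
      + \sum_(z <- map (fun u => if mass u p == 0 then 0
                                 else mass u p * tent S u (fun i => p i / mass u p)) ts) z
  end.

Definition coherent (R : realType) (v : option nat) (S : forall j, 'rV[R]_j -> R) : Prop :=
  forall (m k : nat), (2 <= m)%N -> (m < k)%N -> below v k ->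
  forall f : 'I_m -> 'I_k, (forall a b : 'I_m, (a < b)%N -> (f a < f b)%N) ->
  forall p : 'rV[R]_k, @simplex R k p ->
  (forall j : 'I_k, (forall a, f a != j) -> p ord0 j = 0) ->
  S k p = S m (\row_(a < m) p ord0 (f a)).

Arguments simplex R k : clear implicits.
Arguments bigoplus {R} T S {m} y.
Arguments tree_val {R} T S {n} x t.
Arguments tent {R} S {n} t p.
Arguments mass {R n} t p.
Arguments coherent {R} v S.

(* Main.v *)
Require Import Defs.
From HB Require Import structures.
From mathcomp Require Import all_boot all_order all_algebra.
From mathcomp Require Import all_classical all_reals all_analysis.
From mathcomp Require Import ring lra.
Import Order.TTheory GRing.Theory Num.Theory.
Import numFieldNormedType.Exports.
Local Open Scope classical_set_scope.
Local Open Scope ring_scope.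

Section Evt.
Variable R : realType.

Lemma cont_sum m (s : seq 'I_m) (h : 'I_m -> 'rV[R]_m -> R) :
  (forall j, continuous (h j)) -> continuous (fun q => \sum_(j <- s) h j q).
Proof.
move=> hc; elim: s => [|a s IH].
  by under eq_fun do rewrite big_nil; exact: cst_continuous.
under eq_fun do rewrite big_cons.
by move=> x; apply: continuousD; [exact: hc | exact: IH].
Qed.

Lemma simplex_closed m : closed (simplex R m).
Proof.
have -> : simplex R m = (\bigcap_(i in setT) ((fun q : 'rV[R]_m => q ord0 i) @^-1` [set x | 0 <= x]))
   `&` ((fun q : 'rV[R]_m => \sum_(i < m) q ord0 i) @^-1` [set x | x = 1]).
  apply/seteqP; split => q /=.
    by move=> [h1 h2]; split => // i _; exact: h1.
  by move=> [h1 h2]; split => // i; exact: h1.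
apply: closedI.
  apply: closed_bigI => i _; apply: preimage_closed; last exact: closed_ge.
  by move=> x _; exact: coord_continuous.
apply: preimage_closed; last exact: closed_eq.
by move=> x _; apply: cont_sum => j; exact: coord_continuous.
Qed.

Lemma simplex_compact m : compact (simplex R m).
Proof.
apply: (subclosed_compact (simplex_closed m)
  (rV_compact (fun _ : 'I_m => @segment_compact R 0 1))).
move=> q [h1 h2] i /=; rewrite in_itv /= h1 /=.
rewrite -h2 (bigD1 i) //= lerDl; apply: sumr_ge0 => j _; exact: h1.
Qed.

Lemma simplex_nonempty m : (0 < m)%N -> simplex R m !=set0.
Proof.
move=> hm; pose k := Ordinal hm.
exists (\row_j (if j == k then 1 else 0)); split.
  by move=> i; rewrite mxE; case: ifP.
rewrite (bigD1 k) //= mxE eqxx big1 ?addr0 // => i /negbTE hi.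
by rewrite mxE hi.
Qed.

Lemma bigoplus_min (T : R) (S : forall j, 'rV[R]_j -> R) m (y : 'rV[R]_m) :
  (0 < m)%N -> {within simplex R m, continuous (S m)} ->
  exists2 q, simplex R m q &
    (bigoplus T S y = \sum_(j < m) q ord0 j * y ord0 j - T * S m q) /\
    (forall q', simplex R m q' ->
        bigoplus T S y <= \sum_(j < m) q' ord0 j * y ord0 j - T * S m q').
Proof.
move=> hm hc.
pose F := fun q : 'rV[R]_m => \sum_(j < m) q ord0 j * y ord0 j - T * S m q.
have cF : {within simplex R m, continuous F}.
  move=> x.
  have g1 : continuous (fun q : 'rV[R]_m => \sum_(j < m) q ord0 j * y ord0 j).
    by apply: cont_sum => j w; apply: continuousM;
       [exact: coord_continuous | exact: cst_continuous].
  have g1' := @continuous_subspaceT _ _ (simplex R m) _ g1.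
  have g2 : {for x, continuous ((fun q : subspace (simplex R m) => T * S m q))}.
    apply: (@continuousM R (subspace (simplex R m)) (fun=> T) (S m)).
      exact: cst_continuous.
    exact: hc.
  exact: (@continuousB R R^o (subspace (simplex R m)) _ _ x (g1' x) g2).
have [q qA qmin] := EVT_min_rV (@simplex_nonempty m hm) (simplex_compact m) cF.
have qA' : simplex R m q by move: qA; rewrite inE.
have lb : forall q', simplex R m q' -> F q <= F q'.
  by move=> q' hq'; apply: qmin; rewrite inE.
have E : bigoplus T S y = F q.
  apply/eqP; rewrite eq_le; apply/andP; split.
    have := @ge_inf R [set F q | q in simplex R m]; rewrite /bigoplus; apply.
      by exists (F q) => _ [q' hq' <-]; exact: lb.
    by exists q.
  rewrite /bigoplus; apply: lb_le_inf; first by exists (F q), q.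
  by move=> _ [q' hq' <-]; exact: lb.
exists q => //; split => // q' hq'; rewrite E; exact: lb.
Qed.
End Evt.

Section Trees.
Variable n : nat.
Notation d0 := (@Node n [::]).

Fixpoint tree_ind' (P : tree n -> Prop)
  (hL : forall i, P (Leaf i))
  (hN : forall ts, (forall j, (j < size ts)%N -> P (nth d0 ts j)) -> P (Node ts))
  (t : tree n) : P t :=
  match t with
  | Leaf i => hL i
  | Node ts => hN ts ((fix go (l : seq (tree n)) :
        forall j, (j < size l)%N -> P (nth d0 l j) :=
       match l with
       | [::] => fun j h => False_ind _ (ltac:(discriminate h))
       | u :: l' => fun j => match j return (j < size (u :: l'))%N -> P (nth d0 (u :: l') j) with
                            | 0 => fun _ => tree_ind' P hL hN u
                            | j'.+1 => fun h => go l' j' h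
                            end
       end) ts)
  end.

Lemma flatten_nth_uniq (T : eqType) (s : seq (seq T)) j :
  uniq (flatten s) -> (j < size s)%N -> uniq (nth [::] s j).
Proof.
elim: s j => [|a s IH] [|j] //=; rewrite cat_uniq => /and3P[ua _ us] //.
exact: IH.
Qed.

Lemma flatten_nth_disj (T : eqType) (s : seq (seq T)) j k x :
  uniq (flatten s) -> (j < size s)%N -> (k < size s)%N -> j != k ->
  x \in nth [::] s j -> x \notin nth [::] s k.
Proof.
elim: s j k => [|a s IH] j k //=; rewrite cat_uniq => /and3P[ua ha us].
case: j => [|j]; case: k => [|k] //= hj hk hjk hx.
- apply/negP => hx'; move/negP: ha; apply; apply/hasP; exists x => //.
  by apply/flattenP; exists (nth [::] s k) => //; apply: mem_nth.
- apply/negP => hx'; move/negP: ha; apply; apply/hasP; exists x => //.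
  by apply/flattenP; exists (nth [::] s j) => //; apply: mem_nth.
- exact: (IH j k us hj hk hjk hx).
Qed.

Lemma flatten_nth_mem (T : eqType) (s : seq (seq T)) x :
  x \in flatten s -> exists2 j, (j < size s)%N & x \in nth [::] s j.
Proof.
move/flattenP => [l ls xl]; exists (index l s); first by rewrite index_mem.
by rewrite nth_index.
Qed.

Lemma nth_mem_flatten (T : eqType) (s : seq (seq T)) x j :
  (j < size s)%N -> x \in nth [::] s j -> x \in flatten s.
Proof. by move=> hj hx; apply/flattenP; exists (nth [::] s j) => //; apply: mem_nth. Qed.

Variable R : realType.

Lemma sum_node (ts : seq (tree n)) (f : 'I_n -> R) :
  \sum_(i <- leaves (Node ts)) f i =
  \sum_(j < size ts) \sum_(i <- leaves (nth d0 ts j)) f i.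
Proof.
by rewrite /= big_flatten /= big_map (big_nth d0) big_mkord.
Qed.

Lemma sum_map_nth (ts : seq (tree n)) (g : tree n -> R) :
  \sum_(z <- map g ts) z = \sum_(j < size ts) g (nth d0 ts j).
Proof. by rewrite big_map (big_nth d0) big_mkord. Qed.

Lemma mass_ext (t : tree n) (p p' : 'I_n -> R) :
  (forall i, i \in leaves t -> p i = p' i) -> mass t p = mass t p'.
Proof. by move=> h; rewrite /mass; apply: eq_big_seq => i /h. Qed.

Variable S : forall j, 'rV[R]_j -> R.

Lemma tent_node (ts : seq (tree n)) (p : 'I_n -> R) :
  tent S (Node ts) p =
  S (size ts) (\row_(j < size ts) mass (nth d0 ts j) p) +
  \sum_(j < size ts) (if mass (nth d0 ts j) p == 0 then 0
      else mass (nth d0 ts j) p * tent S (nth d0 ts j) (fun i => p i / mass (nth d0 ts j) p)).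
Proof.
rewrite /= sum_map_nth; congr (S _ _ + _).
by apply/rowP => j; rewrite !mxE (set_nth_default d0).
Qed.

Lemma tent_ext (t : tree n) (p p' : 'I_n -> R) :
  (forall i, i \in leaves t -> p i = p' i) -> tent S t p = tent S t p'.
Proof.
elim/tree_ind': t p p' => [i|ts IH] p p' h //.
rewrite !tent_node.
have hm : forall j, (j < size ts)%N -> mass (nth d0 ts j) p = mass (nth d0 ts j) p'.
  move=> j hj; apply: mass_ext => i hi; apply: h.
  apply: (@nth_mem_flatten _ _ _ j); first by rewrite size_map.
  by rewrite (nth_map d0).
congr (S _ _ + _).
  by apply/rowP => j; rewrite !mxE hm.
apply: eq_bigr => j _; rewrite hm //; case: ifP => // _; congr (_ * _).
apply: IH => // i hi; rewrite h //.
apply: (@nth_mem_flatten _ _ _ j); first by rewrite size_map.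
by rewrite (nth_map d0).
Qed.

Variable T : R.

Lemma tree_val_node (x : 'I_n -> R) (ts : seq (tree n)) :
  tree_val T S x (Node ts) =
  bigoplus T S (\row_(j < size ts) tree_val T S x (nth d0 ts j)).
Proof.
rewrite /= size_map; congr (bigoplus T S _).
by apply/rowP => j; rewrite !mxE (nth_map d0).
Qed.

End Trees.

Section Main.
Variables (R : realType) (T : R) (v : option nat) (S : forall j, 'rV[R]_j -> R).
Hypothesis hcont : forall j : nat, (2 <= j)%N -> below v j ->
     {within simplex R j, continuous (S j)}.
Variables (n : nat) (x : 'I_n -> R).
Notation d0 := (@Node n [::]).

Lemma main_gen (t : tree n) : arity_ok v t -> uniq (leaves t) ->
 (forall p : 'I_n -> R, (forall i, 0 <= p i) -> mass t p = 1 ->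
     tree_val T S x t <= \sum_(i <- leaves t) p i * x i - T * tent S t p) /\
 (exists p : 'I_n -> R, [/\ (forall i, 0 <= p i), (forall i, i \notin leaves t -> p i = 0),
     mass t p = 1 &
     tree_val T S x t = \sum_(i <- leaves t) p i * x i - T * tent S t p]).
Proof.
elim/tree_ind': t => [i|ts IH] hok hu.
  split.
    move=> p p0; rewrite /mass big_seq1 => hm.
    by rewrite /= big_seq1 hm mul1r mulr0 subr0.
  exists (fun k => if k == i then 1 else 0); split.
  - by move=> k; case: ifP.
  - by move=> k; rewrite mem_seq1 => /negbTE ->.
  - by rewrite /mass big_seq1 eqxx.
  - by rewrite /= big_seq1 eqxx mul1r mulr0 subr0.
case/and3P: hok => h2 hb hall.
set m := size ts in h2 hb *.
have m0 : (0 < m)%N by apply: leq_trans h2.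
have hc := @hcont m h2 hb.
have hl : forall j, (j < m)%N -> nth [::] (map (@leaves n) ts) j = leaves (nth d0 ts j).
  by move=> j hj; rewrite (nth_map d0).
have hokj : forall j, (j < m)%N -> arity_ok v (nth d0 ts j).
  by move=> j hj; exact: (all_nthP d0 hall).
have huj : forall j, (j < m)%N -> uniq (leaves (nth d0 ts j)).
  by move=> j hj; rewrite -hl //; apply: flatten_nth_uniq; rewrite ?size_map.
have hdis : forall j k : 'I_m, j != k -> forall i, i \in leaves (nth d0 ts j) ->
    i \notin leaves (nth d0 ts k).
  move=> j k hjk i hi; rewrite -hl //; apply: (@flatten_nth_disj _ _ j) => //;
    rewrite ?size_map ?hl //.
have IHj : forall j : 'I_m, _ := fun j => IH j (ltn_ord j) (hokj j (ltn_ord j)) (huj j (ltn_ord j)).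
have mass_ge0 : forall (u : tree n) (p : 'I_n -> R), (forall i, 0 <= p i) -> 0 <= mass u p.
  by move=> t0 q q0; rewrite /mass; apply: sumr_ge0 => i _.
split.
  move=> p p0 hm1.
  set P := \row_(j < m) mass (nth d0 ts j) p.
  have Ps : simplex R m P.
    split; first by move=> j; rewrite mxE; exact: mass_ge0.
    by rewrite -hm1 /mass sum_node; apply: eq_bigr => j _; rewrite mxE.
  have [_ _ [_ hle]] := @bigoplus_min R T S m (\row_j tree_val T S x (nth d0 ts j)) m0 hc.
  rewrite tree_val_node; apply: le_trans (hle P Ps) _.
  rewrite tent_node sum_node -/P.
  suff key : \sum_(j < m) P ord0 j * (\row_j tree_val T S x (nth d0 ts j)) ord0 j <=
     \sum_(j < m) (\sum_(i <- leaves (nth d0 ts j)) p i * x i -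
        T * (if mass (nth d0 ts j) p == 0 then 0
      else mass (nth d0 ts j) p * tent S (nth d0 ts j) (fun i => p i / mass (nth d0 ts j) p))).
    move: key; rewrite sumrB -mulr_sumr; lra.
  apply: ler_sum => j _; rewrite !mxE.
  have [hz|hz] := eqVneq (mass (nth d0 ts j) p) 0.
    rewrite hz mul0r mulr0 subr0 big1_seq // => i hi.
    move: hz; rewrite /mass => /eqP; rewrite psumr_eq0 // => /allP /(_ i hi) /eqP ->.
    by rewrite mul0r.
  have Pp : 0 < mass (nth d0 ts j) p by rewrite lt_def hz mass_ge0.
  have [hA _] := IHj j.
  have := hA (fun i => p i / mass (nth d0 ts j) p).
  move=> /(_ _ _) h; have {h} h := h (fun i => divr_ge0 (p0 i) (ltW Pp)).
  have {h} h : tree_val T S x (nth d0 ts j) <= \sum_(i <- leaves (nth d0 ts j))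
      p i / mass (nth d0 ts j) p * x i -
     T * tent S (nth d0 ts j) (fun i => p i / mass (nth d0 ts j) p).
    by apply: h; rewrite /mass -mulr_suml mulfV.
  rewrite -(ler_pM2l Pp) in h; apply: le_trans h _.
  rewrite mulrBr mulr_sumr mulrCA le_eqVlt; apply/orP; left; apply/eqP; congr (_ - _).
  apply: eq_bigr => i _; rewrite mulrA mulrCA mulfV ?mulr1 //.
have : forall j : 'I_m, exists q : 'I_n -> R, [/\ (forall i, 0 <= q i),
    (forall i, i \notin leaves (nth d0 ts j) -> q i = 0), mass (nth d0 ts j) q = 1 &
     tree_val T S x (nth d0 ts j) = \sum_(i <- leaves (nth d0 ts j)) q i * x i
       - T * tent S (nth d0 ts j) q].
  by move=> j; have [_ hB] := IHj j.
move/choice => [qf hq].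
have [P [P0 P1] [Peq _]] := @bigoplus_min R T S m (\row_j tree_val T S x (nth d0 ts j)) m0 hc.
pose p i := \sum_(j < m) P ord0 j * qf j i.
have hpk : forall k : 'I_m, forall i, i \in leaves (nth d0 ts k) -> p i = P ord0 k * qf k i.
  move=> k i hi; rewrite /p (bigD1 k) //= big1 ?addr0 // => j hjk.
  have [_ hs _ _] := hq j; rewrite hs ?mulr0 //.
  by apply: (hdis k j) => //; rewrite eq_sym.
have mk : forall k : 'I_m, mass (nth d0 ts k) p = P ord0 k.
  move=> k; rewrite /mass (eq_big_seq (fun i => P ord0 k * qf k i)); last first.
    by move=> i hi; exact: hpk.
  by have [_ _ hm _] := hq k; rewrite -mulr_sumr -/(mass _ _) hm mulr1.
exists p; split.
- by move=> i; apply: sumr_ge0 => j _; have [q0 _ _ _] := hq j; rewrite mulr_ge0.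
- move=> i hi; apply: big1 => j _; have [_ hs _ _] := hq j; rewrite hs ?mulr0 //.
  apply/negP => hij; move/negP: hi; apply.
  by apply: (@nth_mem_flatten _ _ _ j); rewrite ?size_map ?hl.
- by rewrite /mass sum_node -P1; apply: eq_bigr => k _; exact: mk.
rewrite tree_val_node Peq tent_node sum_node.
have -> : \row_(j < m) mass (nth d0 ts j) p = P by apply/rowP => k; rewrite mxE mk.
have term : forall j : 'I_m,
   \sum_(i <- leaves (nth d0 ts j)) p i * x i -
        T * (if mass (nth d0 ts j) p == 0 then 0
      else mass (nth d0 ts j) p * tent S (nth d0 ts j) (fun i => p i / mass (nth d0 ts j) p))
   = P ord0 j * (\row_j tree_val T S x (nth d0 ts j)) ord0 j.
  move=> j; rewrite mxE mk.
  have [_ _ _ ->] := hq j.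
  rewrite (eq_big_seq (fun i => P ord0 j * (qf j i * x i))); last first.
    by move=> i hi; rewrite (hpk j i hi) mulrA.
  rewrite -mulr_sumr.
  have [hz|hz] := eqVneq (P ord0 j) 0.
    by rewrite hz !mul0r mulr0 subr0.
  rewrite (@tent_ext _ _ _ _ (fun i => p i / P ord0 j) (qf j)); last first.
    by move=> i hi; rewrite (hpk j i hi) mulrC mulKf.
  by ring.
rewrite -(eq_bigr _ (fun j _ => term j)) sumrB -mulr_sumr; ring.
Qed.

End Main.

Theorem theorem10p9 (R : realType) (T : R) (v : option nat)
  (S : forall j : nat, 'rV[R]_j -> R)
  (hv : forall v' : nat, v = Some v' -> (2 <= v')%N)
  (hcont : forall j : nat, (2 <= j)%N -> below v j ->
     {within simplex R j, continuous (S j)})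
  (hcoh : coherent v S)
  (n : nat) (t : tree n) (hn : (2 <= n)%N) (ht : is_nv_tree v t)
  (x : 'I_n -> R) :
  (exists p : 'rV[R]_n, simplex R n p /\
     tree_val T S x t = \sum_(i < n) p ord0 i * x i - T * tent S t (fun i => p ord0 i)) /\
  (forall p : 'rV[R]_n, simplex R n p ->
     tree_val T S x t <= \sum_(i < n) p ord0 i * x i - T * tent S t (fun i => p ord0 i)).
Proof.
case/andP: ht => hok hperm.
have hu : uniq (leaves t) by rewrite (perm_uniq hperm) enum_uniq.
have hsum : forall f : 'I_n -> R, \sum_(i <- leaves t) f i = \sum_(i < n) f i.
  by move=> f; rewrite (perm_big _ hperm) big_enum.
have [hA [p [p0 _ pm pe]]] := @main_gen R T v S hcont n x t hok hu.
split.
  exists (\row_i p i); split.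
    split; first by move=> i; rewrite mxE.
    by rewrite -pm /mass -hsum; apply: eq_big_seq => i _; rewrite mxE.
  have -> : (fun i => (\row_k p k) ord0 i) = p by apply/funext => i; rewrite mxE.
  rewrite pe -hsum; congr (_ - _); apply: eq_big_seq => i _; by rewrite mxE.
move=> q [q0 q1]; rewrite -hsum; apply: hA => //.
by rewrite /mass hsum.
Qed.
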